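(* Let $X$ be a quandle, let $s=(x_1,\dots,x_n)\in X^n$, and let $1\le\alpha<\beta\le n$ with $x_\alpha=x_\beta$. Then the image in $S_n$ of the stabilizer of $s$ in $B_n$ contains the transposition $(\alpha\ \beta)$.
   Context: A quandle is a set $X$ with an operation $x^y$ such that $x\mapsto x^y$ is bijective for each $y$, $(z^x)^y=(z^y)^{x^y}$, and $x^x=x$. $B_n$ acts on $X^n$ from the right by $(\dots,x_i,x_{i+1},\dots)^{\sigma_i}=(\dots,x_{i+1},x_i^{x_{i+1}},\dots)$, and $B_n\to S_n$ sends $\sigma_i\mapsto(i\ i+1)$. *)

(* Defs.v *)
From mathcomp Require Import all_boot all_fingroup.
Set Implicit Arguments. Unset Strict Implicit. Unset Printing Implicit Defensive.

(* A quandle structure on X with operation x^y = op x y. *)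
Definition is_quandle (X : Type) (op : X -> X -> X) : Prop :=
  [/\ (forall y, bijective (fun x => op x y)),
      (forall x y z, op (op z x) y = op (op z y) (op x y)) &
      (forall x, op x x = x)].

(* A generator sigma_i^{+1} (bg_sign = true) or sigma_i^{-1} (bg_sign = false)
   of B_n, with i, i+1 positions in 'I_n (0-indexed). *)
Record bgen (n : nat) := BGen {
  bg_pos : 'I_n;
  bg_lt : (bg_pos.+1 < n)%N;
  bg_sign : bool }.

Definition bg_next n (g : bgen n) : 'I_n := Ordinal (bg_lt g).

Definition sigma_act (X : Type) (op : X -> X -> X) n (g : bgen n)
  (s : 'I_n -> X) : 'I_n -> X :=
  fun k => if k == bg_pos g then s (bg_next g)
           else if k == bg_next g then op (s (bg_pos g)) (s (bg_next g))
           else s k.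

(* braid_act op w s t : the braid represented by the word w sends s to t
   (the word is read left to right, right action: s^(g w) = (s^g)^w).
   sigma_i^{-1} sends s to the unique u with u^{sigma_i} = s. *)
Fixpoint braid_act (X : Type) (op : X -> X -> X) n (w : seq (bgen n))
  (s t : 'I_n -> X) : Prop :=
  match w with
  | [::] => s = t
  | g :: w' =>
      if bg_sign g then braid_act op w' (sigma_act op g s) t
      else exists u, sigma_act op g u = s /\ braid_act op w' u t
  end.

Definition braid_perm n (w : seq (bgen n)) : {perm 'I_n} :=
  foldr (fun g p => (tperm (bg_pos g) (bg_next g) * p)%g) 1%g w.

(* Main.v *)
Require Import Defs.
From mathcomp Require Import all_boot all_fingroup.
From Stdlib Require Import FunctionalExtensionality.
From mathcomp Require Import zify.

Lemma braid_act_cat X (op : X -> X -> X) n (w1 w2 : seq (bgen n)) s u t :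
  braid_act op w1 s u -> braid_act op w2 u t -> braid_act op (w1 ++ w2) s t.
Proof.
elim: w1 s => [|g w IH] s /=; first by move=> ->.
case: (bg_sign g) => [H1 H2|[v [Hv H1]] H2]; first exact: IH H1 H2.
by exists v; split=> //; exact: IH H1 H2.
Qed.

Lemma braid_perm_cat n (w1 w2 : seq (bgen n)) :
  braid_perm (w1 ++ w2) = (braid_perm w1 * braid_perm w2)%g.
Proof. by elim: w1 => [|g w IH] /=; [rewrite mul1g | rewrite IH mulgA]. Qed.

Lemma main_ind (X : Type) (op : X -> X -> X) (hX : is_quandle op) n d :
  forall (s : 'I_n -> X) (a b : 'I_n), val b = a + d.+1 -> s a = s b ->
  exists w : seq (bgen n), braid_act op w s s /\ braid_perm w = tperm a b.
Proof.
case: hX => hbij _ hid.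
elim: d => [|d IH] s a b Hb Hs.
  have lt : a.+1 < n by move: (ltn_ord b); rewrite Hb addn1.
  pose g := BGen lt true.
  have Enext : bg_next g = b by apply: val_inj; rewrite /= Hb addn1.
  exists [:: g]; split; last by rewrite /= mulg1 Enext.
  rewrite /=; apply: functional_extensionality => k; rewrite /sigma_act Enext /=.
  case: eqP => [->|_]; first by rewrite Hs.
  case: eqP => [->|_] //; by rewrite -Hs hid.
have lt : a.+1 < n by apply: leq_ltn_trans (ltn_ord b); rewrite Hb addnS ltnS leq_addr.
pose a1 : 'I_n := Ordinal lt.
have [gi K1 K2] := hbij (s a).
pose u := fun k => if k == a then gi (s a1) else if k == a1 then s a else s k.
have na1 : a1 != a by rewrite -val_eqE /=; apply/eqP; lia.
have nba : b != a by rewrite -val_eqE /= Hb; apply/eqP; lia.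
have nba1 : b != a1 by rewrite -val_eqE /= Hb; apply/eqP; lia.
have [w' [Hw' Hp']] : exists w : seq (bgen n), braid_act op w u u /\ braid_perm w = tperm a1 b.
  apply: IH; first by rewrite /= Hb addnS.
  by rewrite /u (negbTE na1) eqxx (negbTE nba) (negbTE nba1).
pose g := BGen lt false.
pose g' := BGen lt true.
have Hsig : sigma_act op g' u = s.
  apply: functional_extensionality => k; rewrite /sigma_act /=.
  case: eqP => [->|/eqP nk]; first by rewrite /u (negbTE na1) eqxx.
  case: eqP => [->|/eqP nk1]; first by rewrite /u eqxx (negbTE na1) eqxx K2.
  by rewrite /u (negbTE nk) (negbTE nk1).
exists (g :: w' ++ [:: g']); split.
  rewrite /=; exists u; split; first exact: Hsig.
  apply: braid_act_cat Hw' _; by rewrite /=.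
rewrite /= braid_perm_cat Hp' /= mulg1 mulgA.
have := tpermJ a1 b (tperm a a1).
rewrite /conjg tpermV mulgA tpermR tpermD //; last by rewrite eq_sym.
by rewrite eq_sym.
Qed.

Theorem lemma4p34 (X : Type) (op : X -> X -> X) (hX : is_quandle op)
  (n : nat) (s : 'I_n -> X) (a b : 'I_n) :
  (a < b)%N -> s a = s b ->
  exists w : seq (bgen n), braid_act op w s s /\ braid_perm w = tperm a b.
Proof.
move=> ab Hs; apply: (@main_ind X op hX n (b - a.+1)) Hs.
by rewrite addnS -addSn subnKC.
Qed.
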